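(* Let $G$ be a group and $V$ a normal abelian subgroup of $G$. Suppose that every chain of nested subgroups $H_0<H_1<\dots<H_m$ in $G/V$ has length $m\leqslant l$. Then the $c$-dimension of $G$ is at most $2l$. If moreover $V$ is central in $G$, then the $c$-dimension of $G$ is at most $l$.
   Context: The $c$-dimension of a group $G$ is the maximal length $k$ of a chain of nested centralizers $C_G(Y_0)<C_G(Y_1)<\dots<C_G(Y_k)$ (strict inclusions) of subsets $Y_i\subseteq G$. The length of a chain of subgroups $H_0<\dots<H_m$ (strict inclusions) is $m$. *)

(* Defs.v *)
Set Implicit Arguments.

Record Group : Type := {
  carrier :> Type;
  gmul : carrier -> carrier -> carrier;
  gone : carrier;
  ginv : carrier -> carrier;
  gmulA : forall x y z, gmul x (gmul y z) = gmul (gmul x y) z;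
  gmul1l : forall x, gmul gone x = x;
  gmul1r : forall x, gmul x gone = x;
  gmulVl : forall x, gmul (ginv x) x = gone;
  gmulVr : forall x, gmul x (ginv x) = gone
}.

Section Defs.
Variable G : Group.

Definition subset (A B : G -> Prop) : Prop := forall x, A x -> B x.
Definition strict_subset (A B : G -> Prop) : Prop :=
  subset A B /\ ~ subset B A.

Definition is_subgroup (H : G -> Prop) : Prop :=
  H (gone G) /\
  (forall x y, H x -> H y -> H (gmul G x y)) /\
  (forall x, H x -> H (ginv G x)).

Definition is_normal (H : G -> Prop) : Prop :=
  forall h g, H h -> H (gmul G (ginv G g) (gmul G h g)).

Definition is_abelian (H : G -> Prop) : Prop :=
  forall x y, H x -> H y -> gmul G x y = gmul G y x.

Definition is_central (H : G -> Prop) : Prop :=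
  forall h g, H h -> gmul G h g = gmul G g h.

Definition centralizer (Y : G -> Prop) : G -> Prop :=
  fun g => forall y, Y y -> gmul G g y = gmul G y g.

Definition cdim_le (n : nat) : Prop :=
  forall (k : nat) (Y : nat -> G -> Prop),
    (forall i, i < k -> strict_subset (centralizer (Y i)) (centralizer (Y (S i)))) ->
    k <= n.

Definition subgroup_chains_le (l : nat) : Prop :=
  forall (m : nat) (H : nat -> G -> Prop),
    (forall i, i <= m -> is_subgroup (H i)) ->
    (forall i, i < m -> strict_subset (H i) (H (S i))) ->
    m <= l.
End Defs.

Definition is_hom {G Q : Group} (f : G -> Q) : Prop :=
  forall x y, f (gmul G x y) = gmul Q (f x) (f y).

(* pi : G -> Q presents Q as the quotient G/V: a surjective homomorphism
   with kernel exactly V. *)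
Definition is_quotient_map {G Q : Group} (V : G -> Prop) (pi : G -> Q) : Prop :=
  is_hom pi /\ (forall q : Q, exists g, pi g = q) /\
  (forall g, V g <-> pi g = gone Q).

(* Main.v *)
Require Import Defs.
From Stdlib Require Import Classical ClassicalEpsilon Lia Arith.

Section GL.
Variable G : Group.

Lemma comm_inv (a b : G) : gmul G a b = gmul G b a -> gmul G (ginv G a) b = gmul G b (ginv G a).
Proof.
  intro H.
  rewrite <- (gmul1r G (gmul G (ginv G a) b)).
  rewrite <- (gmulVr G a).
  rewrite (gmulA G (gmul G (ginv G a) b) a (ginv G a)).
  rewrite <- (gmulA G (ginv G a) b a), <- H, (gmulA G (ginv G a) a b), gmulVl, gmul1l.
  reflexivity.
Qed.

Lemma comm_mul (a b v : G) : gmul G a v = gmul G v a -> gmul G b v = gmul G v b ->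
  gmul G (gmul G a b) v = gmul G v (gmul G a b).
Proof.
  intros Ha Hb.
  rewrite <- gmulA, Hb, gmulA, Ha, <- gmulA. reflexivity.
Qed.

Lemma inv_inv (x : G) : ginv G (ginv G x) = x.
Proof.
  rewrite <- (gmul1r G (ginv G (ginv G x))), <- (gmulVl G x), gmulA, gmulVl, gmul1l.
  reflexivity.
Qed.

Lemma mul_inv_cancel (x y : G) : gmul G x (gmul G (ginv G x) y) = y.
Proof. rewrite gmulA, gmulVr, gmul1l. reflexivity. Qed.

Lemma inv_mul_cancel (x y : G) : gmul G (ginv G x) (gmul G x y) = y.
Proof. rewrite gmulA, gmulVl, gmul1l. reflexivity. Qed.

Lemma centralizer_sub (Y : G -> Prop) : is_subgroup G (centralizer G Y).
Proof.
  unfold centralizer; split; [|split].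
  - intros y _. rewrite gmul1l, gmul1r. reflexivity.
  - intros x z Hx Hz y Hy. apply comm_mul; auto.
  - intros x Hx y Hy. apply comm_inv; auto.
Qed.
End GL.

Lemma hom_one (G Q : Group) (f : G -> Q) : is_hom f -> f (gone G) = gone Q.
Proof.
  intro Hf.
  assert (E : f (gone G) = gmul Q (f (gone G)) (f (gone G))).
  { rewrite <- Hf, gmul1l. reflexivity. }
  rewrite <- (inv_mul_cancel Q (f (gone G)) (f (gone G))).
  rewrite <- E. apply gmulVl.
Qed.

Lemma hom_inv (G Q : Group) (f : G -> Q) (x : G) : is_hom f -> f (ginv G x) = ginv Q (f x).
Proof.
  intro Hf.
  rewrite <- (gmul1r Q (f (ginv G x))), <- (gmulVr Q (f x)), gmulA, <- Hf, gmulVl,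
    hom_one, gmul1l by exact Hf. reflexivity.
Qed.

Fixpoint cnt (s : nat -> bool) (k : nat) : nat :=
  match k with 0 => 0 | S k => cnt s k + (if s k then 1 else 0) end.

Lemma cnt_split (s : nat -> bool) k : cnt s k + cnt (fun i => negb (s i)) k = k.
Proof. induction k; simpl; auto. destruct (s k); simpl; lia. Qed.

Lemma cnt_true k : cnt (fun _ => true) k = k.
Proof. induction k; simpl; auto; lia. Qed.

Lemma chain_up (Q : Group) (A : nat -> Q -> Prop) (s : nat -> bool) : forall k,
  (forall i, i <= k -> is_subgroup Q (A i)) ->
  (forall i, i < k -> subset Q (A i) (A (S i))) ->
  (forall i, i < k -> s i = true -> strict_subset Q (A i) (A (S i))) ->
  exists H : nat -> Q -> Prop,
    (forall i, i <= cnt s k -> is_subgroup Q (H i)) /\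
    (forall i, i < cnt s k -> strict_subset Q (H i) (H (S i))) /\
    subset Q (H (cnt s k)) (A k).
Proof.
  induction k as [|k IH]; intros Hs Hm Hst.
  - exists A; simpl; split; [|split].
    + intros i Hi. apply Hs. lia.
    + intros; lia.
    + intros x Hx; exact Hx.
  - destruct IH as [H [H1 [H2 H3]]].
    + intros; apply Hs; lia.
    + intros; apply Hm; lia.
    + intros; apply Hst; auto; lia.
    + simpl. destruct (s k) eqn:E.
      * set (m := cnt s k) in *.
        exists (fun i => if Nat.eqb i (S m) then A (S k) else H i).
        replace (m + 1) with (S m) by lia.
        split; [|split].
        -- intros i Hi. destruct (Nat.eqb i (S m)) eqn:Ei.
           ++ apply Hs; lia.
           ++ apply Nat.eqb_neq in Ei. apply H1. lia.
        -- intros i Hi.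
           assert (Ei : Nat.eqb i (S m) = false) by (apply Nat.eqb_neq; lia).
           rewrite Ei. destruct (Nat.eqb (S i) (S m)) eqn:Ei2.
           ++ apply Nat.eqb_eq in Ei2. assert (i = m) by lia. subst i.
              destruct (Hst k ltac:(lia) E) as [S1 S2]. split.
              ** intros x Hx. apply S1, H3, Hx.
              ** intro C. apply S2. intros x Hx. apply H3, C, Hx.
           ++ apply Nat.eqb_neq in Ei2. apply H2. lia.
        -- rewrite Nat.eqb_refl. intros x Hx; exact Hx.
      * exists H. rewrite Nat.add_0_r. split; [|split]; auto.
        intros x Hx. apply Hm; [lia|]. apply H3, Hx.
Qed.

Lemma chain_down (Q : Group) (A : nat -> Q -> Prop) (s : nat -> bool) : forall k,
  (forall i, i <= k -> is_subgroup Q (A i)) ->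
  (forall i, i < k -> subset Q (A (S i)) (A i)) ->
  (forall i, i < k -> s i = true -> strict_subset Q (A (S i)) (A i)) ->
  exists H : nat -> Q -> Prop,
    (forall i, i <= cnt s k -> is_subgroup Q (H i)) /\
    (forall i, i < cnt s k -> strict_subset Q (H i) (H (S i))) /\
    subset Q (A k) (H 0).
Proof.
  induction k as [|k IH]; intros Hs Hm Hst.
  - exists A; simpl; split; [|split].
    + intros i Hi. apply Hs. lia.
    + intros; lia.
    + intros x Hx; exact Hx.
  - destruct IH as [H [H1 [H2 H3]]].
    + intros; apply Hs; lia.
    + intros; apply Hm; lia.
    + intros; apply Hst; auto; lia.
    + simpl. destruct (s k) eqn:E.
      * set (m := cnt s k) in *.
        exists (fun i => match i with 0 => A (S k) | S j => H j end).
        replace (m + 1) with (S m) by lia.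
        split; [|split].
        -- intros [|i] Hi. ++ apply Hs; lia. ++ apply H1. lia.
        -- intros [|i] Hi.
           ++ destruct (Hst k ltac:(lia) E) as [S1 S2]. split.
              ** intros x Hx. apply H3, S1, Hx.
              ** intro C. apply S2. intros x Hx. apply C, H3, Hx.
           ++ apply H2. lia.
        -- intros x Hx; exact Hx.
      * exists H. rewrite Nat.add_0_r. split; [|split]; auto.
        intros x Hx. apply H3. apply Hm; [lia|]. exact Hx.
Qed.

Section Main.
Set Implicit Arguments.
Variables (G : Group) (V : G -> Prop) (Q : Group) (pi : G -> Q).
Hypotheses (HV : is_subgroup G V) (HN : is_normal G V) (HA : is_abelian G V)
  (HQ : is_quotient_map V pi).

Definition Im (C : G -> Prop) : Q -> Prop := fun q => exists g, C g /\ pi g = q.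
Definition Dq (C : G -> Prop) : Q -> Prop :=
  fun q => forall g, pi g = q -> forall v, V v -> C v -> gmul G g v = gmul G v g.

Lemma Im_sub C : is_subgroup G C -> is_subgroup Q (Im C).
Proof.
  destruct HQ as [Hh _]. intros [C1 [C2 C3]]. split; [|split].
  - exists (gone G); split; auto. apply hom_one; auto.
  - intros x y [g [Hg <-]] [h [Hh' <-]]. exists (gmul G g h); split; auto.
  - intros x [g [Hg <-]]. exists (ginv G g); split; auto. apply hom_inv; auto.
Qed.

Lemma Dq_sub C : is_subgroup Q (Dq C).
Proof.
  destruct HQ as [Hh [Hs Hk]]. split; [|split].
  - intros g Hg v Hv _. apply HA; auto. apply Hk; auto.
  - intros x y Dx Dy g Hg v Hv Cv.
    destruct (Hs x) as [g1 Hg1].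
    set (g2 := gmul G (ginv G g1) g).
    assert (E : g = gmul G g1 g2) by (unfold g2; rewrite mul_inv_cancel; reflexivity).
    assert (P2 : pi g2 = y).
    { unfold g2. rewrite Hh, hom_inv, Hg, Hg1, inv_mul_cancel by exact Hh. reflexivity. }
    rewrite E. apply comm_mul; [apply Dx | apply Dy]; auto.
  - intros x Dx g Hg v Hv Cv.
    assert (P : pi (ginv G g) = x) by (rewrite hom_inv, Hg, inv_inv by exact Hh; reflexivity).
    pose proof (Dx _ P v Hv Cv) as E.
    rewrite <- (inv_inv G g). apply comm_inv. exact E.
Qed.

Lemma Dq_anti (C1 C2 : G -> Prop) : subset G C1 C2 -> subset Q (Dq C2) (Dq C1).
Proof. intros S q D g Hg v Hv Cv. apply D; auto. Qed.

Lemma Im_mono (C1 C2 : G -> Prop) : subset G C1 C2 -> subset Q (Im C1) (Im C2).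
Proof. intros S q [g [Hg <-]]. exists g; auto. Qed.

Lemma step (Y1 Y2 : G -> Prop) :
  strict_subset G (centralizer G Y1) (centralizer G Y2) ->
  strict_subset Q (Im (centralizer G Y1)) (Im (centralizer G Y2)) \/
  strict_subset Q (Dq (centralizer G Y2)) (Dq (centralizer G Y1)).
Proof.
  intros [S1 S2].
  destruct HQ as [Hh [Hs Hk]].
  destruct (classic (subset Q (Im (centralizer G Y2)) (Im (centralizer G Y1)))) as [I|I];
    [| left; split; [apply Im_mono; auto | exact I]].
  destruct (classic (subset Q (Dq (centralizer G Y1)) (Dq (centralizer G Y2)))) as [D|D];
    [| right; split; [apply Dq_anti; auto | exact D]].
  exfalso. apply S2. intros x Hx.
  destruct (I (pi x) (ex_intro _ x (conj Hx eq_refl))) as [c [Hc Pc]].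
  destruct (centralizer_sub G Y1) as [_ [M1 _]].
  destruct (centralizer_sub G Y2) as [_ [M2 V2]].
  set (w := gmul G (ginv G c) x).
  assert (Vw : V w).
  { apply Hk. unfold w. rewrite Hh, hom_inv, Pc, gmulVl by exact Hh. reflexivity. }
  assert (C2w : centralizer G Y2 w) by (apply M2; auto).
  assert (C1w : centralizer G Y1 w).
  { intros y Hy.
    assert (Dy : Dq (centralizer G Y1) (pi y)).
    { intros g Hg v Hv Cv.
      set (u := gmul G (ginv G y) g).
      assert (Vu : V u).
      { apply Hk. unfold u. rewrite Hh, hom_inv, Hg, gmulVl by exact Hh. reflexivity. }
      assert (E : g = gmul G y u) by (unfold u; rewrite mul_inv_cancel; reflexivity).
      rewrite E. apply comm_mul.
      - symmetry. apply Cv; auto.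
      - apply HA; auto. }
    symmetry. apply (D _ Dy y eq_refl w Vw C2w). }
  replace x with (gmul G c w) by (unfold w; apply mul_inv_cancel).
  apply M1; auto.
Qed.
End Main.

Theorem lemma2 (G : Group) (V : G -> Prop) (Q : Group) (pi : G -> Q) (l : nat) :
  is_subgroup G V -> is_normal G V -> is_abelian G V ->
  is_quotient_map V pi ->
  subgroup_chains_le Q l ->
  cdim_le G (2 * l) /\ (is_central G V -> cdim_le G l).
Proof.
  intros HV HN HA HQ Hl. split.
  - intros k Y Hch.
    set (C := fun i => centralizer G (Y i)).
    set (s := fun i => if excluded_middle_informative
                 (strict_subset Q (Im G Q pi (C i)) (Im G Q pi (C (S i)))) then true else false).
    assert (A1 : cnt s k <= l).
    { destruct (chain_up Q (fun i => Im G Q pi (C i)) s k) as [H [H1 [H2 _]]].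
      - intros; apply (Im_sub HQ). apply centralizer_sub.
      - intros i Hi. apply Im_mono. apply Hch; auto.
      - intros i Hi E. unfold s in E.
        destruct (excluded_middle_informative _); auto; discriminate.
      - exact (Hl _ H H1 H2). }
    assert (A2 : cnt (fun i => negb (s i)) k <= l).
    { destruct (chain_down Q (fun i => Dq G V Q pi (C i)) (fun i => negb (s i)) k)
        as [H [H1 [H2 _]]].
      - intros; apply Dq_sub; auto.
      - intros i Hi. apply Dq_anti. apply Hch; auto.
      - intros i Hi E. unfold s in E.
        destruct (excluded_middle_informative _) as [X|X]; [discriminate|].
        destruct (step HA HQ (Hch i Hi)) as [Z|Z];
          [contradiction | exact Z].
      - exact (Hl _ H H1 H2). }
    pose proof (cnt_split s k). lia.
  - intros Hc k Y Hch.
    rewrite <- (cnt_true k).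
    destruct (chain_up Q (fun i => Im G Q pi (centralizer G (Y i))) (fun _ => true) k)
      as [H [H1 [H2 _]]].
    + intros; apply (Im_sub HQ). apply centralizer_sub.
    + intros i Hi. apply Im_mono. apply Hch; auto.
    + intros i Hi _.
      destruct (step HA HQ (Hch i Hi)) as [Z|[_ Z]]; auto.
      exfalso. apply Z. intros q _ g _ v Hv _. symmetry. apply Hc; auto.
    + exact (Hl _ H H1 H2).
Qed.
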